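(* Let $C=(C_1,C_0,s,t,\varepsilon,m)$ be an internal category in $\mathsf{XMod}$ with $C_1=(A_1,B_1,\alpha_1)$, $C_0=(A_0,B_0,\alpha_0)$. Put $L=\ker s_A$, $M=\ker s_B$, $N=A_0$, $P=B_0$, $\lambda=\alpha_1|_{L}:L\to M$, $\lambda'=t_A|_{L}:L\to N$, $\mu=t_B|_{M}:M\to P$, $\nu=\alpha_0:N\to P$. Let $P$ act on $N$ by the given action of $B_0$ on $A_0$, on $M$ by $p\cdot m=1_p+m-1_p$, and on $L$ by $p\cdot l=1_p\cdot l$ (action of $B_1$ on $A_1$). Define $h:M\times N\to L$ by $h(m,n)=m\cdot 1_n-1_n$, where $m\cdot 1_n$ is the action of $m\in B_1$ on $1_n\in A_1$. Then $(L,M,N,P)$ with these data is a crossed square.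
   Context: Groups are written additively. A crossed module $(A,B,\alpha)$: groups $A,B$, a left action of $B$ on $A$ by automorphisms, a homomorphism $\alpha:A\to B$ with $\alpha(b\cdot a)=b+\alpha(a)-b$ and $\alpha(a)\cdot a'=a+a'-a$. Morphisms $\langle f_A,f_B\rangle$ are pairs of homomorphisms with $f_B\alpha=\alpha'f_A$, $f_A(b\cdot a)=f_B(b)\cdot f_A(a)$. An internal category in $\mathsf{XMod}$ consists of crossed modules $C_1=(A_1,B_1,\alpha_1)$, $C_0=(A_0,B_0,\alpha_0)$ and crossed module morphisms $s=\langle s_A,s_B\rangle, t=\langle t_A,t_B\rangle:C_1\to C_0$, $\varepsilon=\langle\varepsilon_A,\varepsilon_B\rangle:C_0\to C_1$, $m=\langle m_A,m_B\rangle:C_1\,{}_s\!\times_t C_1\to C_1$ (pullback computed componentwise, pairs $(x,y)$ with $s(x)=t(y)$, componentwise action) satisfying $s\varepsilon=t\varepsilon=1$, $sm=s\pi_2$, $tm=t\pi_1$, associativity $m(1\times m)=m(m\times1)$ and unit laws $m(\varepsilon s,1)=m(1,\varepsilon t)=1$. Notation: $1_x=\varepsilon_A(x)$ or $\varepsilon_B(x)$. A crossed square: homomorphisms $\lambda:L\to M$, $\lambda':L\to N$, $\mu:M\to P$, $\nu:N\to P$ with $\nu\lambda'=\mu\lambda$, left actions of $P$ on $L,M,N$ (inducing actions of $M$ on $L,N$ via $\mu$ and of $N$ on $L,M$ via $\nu$), and $h:M\times N\to L$, such that (i) $\lambda,\lambda'$ are $P$-equivariant and $\mu$, $\nu$,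 $\mu\lambda$ are crossed modules; (ii) $\lambda h(m,n)=m+n\cdot(-m)$, $\lambda'h(m,n)=m\cdot n-n$; (iii) $h(\lambda(l),n)=l+n\cdot(-l)$, $h(m,\lambda'(l))=m\cdot l-l$; (iv) $h(m+m',n)=m\cdot h(m',n)+h(m,n)$, $h(m,n+n')=h(m,n)+n\cdot h(m,n')$; (v) $h(p\cdot m,p\cdot n)=p\cdot h(m,n)$. *)

(* Defs.v *)
From Stdlib Require Import ProofIrrelevance.
Set Implicit Arguments.
Unset Strict Implicit.

Record Grp := {
  gcar :> Type;
  gadd : gcar -> gcar -> gcar;
  gzero : gcar;
  gopp : gcar -> gcar;
  gaddA : forall x y z, gadd x (gadd y z) = gadd (gadd x y) z;
  gadd0l : forall x, gadd gzero x = x;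
  gadd0r : forall x, gadd x gzero = x;
  gaddNl : forall x, gadd (gopp x) x = gzero;
  gaddNr : forall x, gadd x (gopp x) = gzero }.

Arguments gadd {_} _ _.
Arguments gzero {_}.
Arguments gopp {_} _.

Declare Scope grp_scope.
Delimit Scope grp_scope with grp.
Notation "x + y" := (gadd x y) : grp_scope.
Notation "- x" := (gopp x) : grp_scope.
Notation "x - y" := (gadd x (gopp y)) : grp_scope.
Notation "0" := gzero : grp_scope.
Open Scope grp_scope.

Section GrpTheory.
Variable G : Grp.
Implicit Types x y z : G.

Lemma addKl x y z : x + y = x + z -> y = z.
Proof.
  intro H. rewrite <- (gadd0l y), <- (gadd0l z), <- (gaddNl x), <- !gaddA, H.
  reflexivity.
Qed.

Lemma addKr x y z : y + x = z + x -> y = z.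
Proof.
  intro H. rewrite <- (gadd0r y), <- (gadd0r z), <- (gaddNr x), !gaddA, H.
  reflexivity.
Qed.
End GrpTheory.

Definition is_hom (G H : Grp) (f : G -> H) := forall x y, f (x + y) = f x + f y.

Lemma hom0 (G H : Grp) (f : G -> H) : is_hom f -> f 0 = 0.
Proof.
  intro hf. apply (@addKr H (f 0)). rewrite <- hf, !gadd0l. reflexivity.
Qed.

Lemma homN (G H : Grp) (f : G -> H) x : is_hom f -> f (- x) = - f x.
Proof.
  intro hf. apply (@addKr H (f x)). rewrite <- hf, gaddNl, gaddNl.
  apply hom0; exact hf.
Qed.

Record is_action (P X : Grp) (a : P -> X -> X) : Prop := {
  act0 : forall x, a 0 x = x;
  actD : forall p q x, a (p + q) x = a p (a q x);
  act_hom : forall p, is_hom (a p) }.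

Record is_xmod (A B : Grp) (act : B -> A -> A) (alpha : A -> B) : Prop := {
  xm_action : is_action act;
  xm_hom : is_hom alpha;
  xm_equiv : forall b a, alpha (act b a) = b + alpha a - b;
  xm_peiffer : forall a a', act (alpha a) a' = a + a' - a }.

Record XMod := {
  xA : Grp;
  xB : Grp;
  xact : xB -> xA -> xA;
  xalpha : xA -> xB;
  xmodP : is_xmod xact xalpha }.
Arguments xact : clear implicits.
Arguments xalpha : clear implicits.

Record is_xmorph (C D : XMod) (fA : xA C -> xA D) (fB : xB C -> xB D) : Prop := {
  xmor_homA : is_hom fA;
  xmor_homB : is_hom fB;
  xmor_alpha : forall a, fB (xalpha C a) = xalpha D (fA a);
  xmor_act : forall b a, fA (xact C b a) = xact D (fB b) (fA a) }.
Arguments is_xmorph : clear implicits.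

(* The composition m is defined on the pullback C1 _s x_t C1, i.e. on   *)
(* pairs (x,y) with s x = t y; we encode it as a function taking a      *)
(* proof of composability.  Being a morphism of crossed modules out of  *)
(* the (componentwise) pullback crossed module is spelled out below.    *)
Unset Implicit Arguments.
Record IntCatXMod := {
  ic1 : XMod;
  ic0 : XMod;
  sA : xA ic1 -> xA ic0;
  sB : xB ic1 -> xB ic0;
  tA : xA ic1 -> xA ic0;
  tB : xB ic1 -> xB ic0;
  eA : xA ic0 -> xA ic1;
  eB : xB ic0 -> xB ic1;
  mA : forall x y : xA ic1, sA x = tA y -> xA ic1;
  mB : forall x y : xB ic1, sB x = tB y -> xB ic1;
  s_xmorph : is_xmorph ic1 ic0 sA sB;
  t_xmorph : is_xmorph ic1 ic0 tA tB;
  e_xmorph : is_xmorph ic0 ic1 eA eB;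
  mA_hom : forall x y x' y' (H : sA x = tA y) (H' : sA x' = tA y')
             (H'' : sA (x + x') = tA (y + y')),
             mA (x + x') (y + y') H'' = mA x y H + mA x' y' H';
  mB_hom : forall x y x' y' (H : sB x = tB y) (H' : sB x' = tB y')
             (H'' : sB (x + x') = tB (y + y')),
             mB (x + x') (y + y') H'' = mB x y H + mB x' y' H';
  m_alpha : forall x y (H : sA x = tA y)
              (H' : sB (xalpha ic1 x) = tB (xalpha ic1 y)),
              mB (xalpha ic1 x) (xalpha ic1 y) H' = xalpha ic1 (mA x y H);
  m_act : forall b b' x y (Hb : sB b = tB b') (Hx : sA x = tA y)
            (H' : sA (xact ic1 b x) = tA (xact ic1 b' y)),
            mA (xact ic1 b x) (xact ic1 b' y) H' = xact ic1 (mB b b' Hb) (mA x y Hx);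
  seA : forall a, sA (eA a) = a;
  seB : forall b, sB (eB b) = b;
  teA : forall a, tA (eA a) = a;
  teB : forall b, tB (eB b) = b;
  smA : forall x y (H : sA x = tA y), sA (mA x y H) = sA y;
  smB : forall x y (H : sB x = tB y), sB (mB x y H) = sB y;
  tmA : forall x y (H : sA x = tA y), tA (mA x y H) = tA x;
  tmB : forall x y (H : sB x = tB y), tB (mB x y H) = tB x;
  assocA : forall x y z (H1 : sA x = tA y) (H2 : sA y = tA z)
             (H3 : sA x = tA (mA y z H2)) (H4 : sA (mA x y H1) = tA z),
             mA x (mA y z H2) H3 = mA (mA x y H1) z H4;
  assocB : forall x y z (H1 : sB x = tB y) (H2 : sB y = tB z)
             (H3 : sB x = tB (mB y z H2)) (H4 : sB (mB x y H1) = tB z),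
             mB x (mB y z H2) H3 = mB (mB x y H1) z H4;
  unitlA : forall x (H : sA (eA (tA x)) = tA x), mA (eA (tA x)) x H = x;
  unitrA : forall x (H : sA x = tA (eA (sA x))), mA x (eA (sA x)) H = x;
  unitlB : forall x (H : sB (eB (tB x)) = tB x), mB (eB (tB x)) x H = x;
  unitrB : forall x (H : sB x = tB (eB (sB x))), mB x (eB (sB x)) H = x }.
Set Implicit Arguments.

Record crossed_square (L M N P : Grp) (lam : L -> M) (lam' : L -> N)
    (mu : M -> P) (nu : N -> P)
    (aL : P -> L -> L) (aM : P -> M -> M) (aN : P -> N -> N)
    (h : M -> N -> L) : Prop := {
  cs_lam_hom : is_hom lam;
  cs_lam'_hom : is_hom lam';
  cs_mu_hom : is_hom mu;
  cs_nu_hom : is_hom nu;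
  cs_comm : forall l, nu (lam' l) = mu (lam l);
  cs_actL : is_action aL;
  cs_actM : is_action aM;
  cs_actN : is_action aN;
  cs_lam_equiv : forall p l, lam (aL p l) = aM p (lam l);
  cs_lam'_equiv : forall p l, lam' (aL p l) = aN p (lam' l);
  cs_mu_xmod : is_xmod aM mu;
  cs_nu_xmod : is_xmod aN nu;
  cs_mulam_xmod : is_xmod aL (fun l => mu (lam l));
  cs_lam_h : forall m n, lam (h m n) = m + aM (nu n) (- m);
  cs_lam'_h : forall m n, lam' (h m n) = aN (mu m) n - n;
  cs_h_laml : forall l n, h (lam l) n = l + aL (nu n) (- l);
  cs_h_lam'r : forall m l, h m (lam' l) = aL (mu m) l - l;
  cs_hDl : forall m m' n, h (m + m') n = aL (mu m) (h m' n) + h m n;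
  cs_hDr : forall m n n', h m (n + n') = h m n + aL (nu n) (h m n');
  cs_hP : forall p m n, h (aM p m) (aN p n) = aL p (h m n) }.

Section Sub.
Variables (G : Grp) (S : G -> Prop) (S0 : S 0)
  (SD : forall x y, S x -> S y -> S (x + y)) (SN : forall x, S x -> S (- x)).

Definition sub_car := {x : G | S x}.
Definition sub_add (u v : sub_car) : sub_car :=
  exist _ (proj1_sig u + proj1_sig v) (SD (proj2_sig u) (proj2_sig v)).
Definition sub_zero : sub_car := exist _ 0 S0.
Definition sub_opp (u : sub_car) : sub_car := exist _ (- proj1_sig u) (SN (proj2_sig u)).

Lemma sub_eq (u v : sub_car) : proj1_sig u = proj1_sig v -> u = v.
Proof.
  destruct u as [x hx], v as [y hy]; simpl; intro E; subst y.
  f_equal; apply proof_irrelevance.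
Qed.

Definition subGrp : Grp :=
  {| gcar := sub_car; gadd := sub_add; gzero := sub_zero; gopp := sub_opp;
     gaddA := fun x y z => @sub_eq (sub_add x (sub_add y z)) (sub_add (sub_add x y) z)
                 (gaddA _ _ _);
     gadd0l := fun x => @sub_eq (sub_add sub_zero x) x (gadd0l _);
     gadd0r := fun x => @sub_eq (sub_add x sub_zero) x (gadd0r _);
     gaddNl := fun x => @sub_eq (sub_add (sub_opp x) x) sub_zero (gaddNl _);
     gaddNr := fun x => @sub_eq (sub_add x (sub_opp x)) sub_zero (gaddNr _) |}.
End Sub.

Section Kernel.
Variables (G H : Grp) (f : G -> H) (hf : is_hom f).

Lemma ker0 : f 0 = 0.
Proof. apply hom0; exact hf. Qed.
Lemma kerD x y : f x = 0 -> f y = 0 -> f (x + y) = 0.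
Proof. intros Hx Hy. rewrite hf, Hx, Hy, gadd0l. reflexivity. Qed.
Lemma kerN x : f x = 0 -> f (- x) = 0.
Proof. intro Hx. rewrite (homN x hf), Hx. apply (@addKr H 0). rewrite gaddNl, gadd0l. reflexivity. Qed.

Definition kerGrp : Grp :=
  @subGrp G (fun x => f x = 0) ker0 kerD kerN.
End Kernel.

Section ICdata.
Variable C : IntCatXMod.

Definition Lgrp : Grp := kerGrp (xmor_homA (s_xmorph C)).
Definition Mgrp : Grp := kerGrp (xmor_homB (s_xmorph C)).
Definition Ngrp : Grp := xA (ic0 C).
Definition Pgrp : Grp := xB (ic0 C).

Lemma lam_ok (x : xA (ic1 C)) : sA C x = 0 -> sB C (xalpha (ic1 C) x) = 0.
Proof.
  intro Hx. rewrite (xmor_alpha (s_xmorph C)), Hx.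
  apply hom0; exact (xm_hom (xmodP (ic0 C))).
Qed.

Definition lamC (l : Lgrp) : Mgrp :=
  exist _ (xalpha (ic1 C) (proj1_sig l)) (lam_ok (proj2_sig l)).
Definition lam'C (l : Lgrp) : Ngrp := tA C (proj1_sig l).
Definition muC (m : Mgrp) : Pgrp := tB C (proj1_sig m).
Definition nuC (n : Ngrp) : Pgrp := xalpha (ic0 C) n.

Definition aNC (p : Pgrp) (n : Ngrp) : Ngrp := xact (ic0 C) p n.

Lemma aM_ok (p : Pgrp) (x : xB (ic1 C)) : sB C x = 0 ->
  sB C (eB C p + x - eB C p) = 0.
Proof.
  intro Hx. pose proof (xmor_homB (s_xmorph C)) as hs.
  rewrite !hs, (homN _ hs), seB, Hx, gadd0r, gaddNr. reflexivity.
Qed.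

Definition aMC (p : Pgrp) (m : Mgrp) : Mgrp :=
  exist _ (eB C p + proj1_sig m - eB C p) (aM_ok p (proj2_sig m)).

Lemma aL_ok (p : Pgrp) (x : xA (ic1 C)) : sA C x = 0 ->
  sA C (xact (ic1 C) (eB C p) x) = 0.
Proof.
  intro Hx. rewrite (xmor_act (s_xmorph C)), seB, Hx.
  apply hom0; exact (act_hom (xm_action (xmodP (ic0 C))) p).
Qed.

Definition aLC (p : Pgrp) (l : Lgrp) : Lgrp :=
  exist _ (xact (ic1 C) (eB C p) (proj1_sig l)) (aL_ok p (proj2_sig l)).

Lemma h_ok (x : xB (ic1 C)) (n : Ngrp) : sB C x = 0 ->
  sA C (xact (ic1 C) x (eA C n) - eA C n) = 0.
Proof.
  intro Hx. pose proof (xmor_homA (s_xmorph C)) as hs.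
  rewrite hs, (homN _ hs), (xmor_act (s_xmorph C)), Hx, seA,
    (act0 (xm_action (xmodP (ic0 C)))), gaddNr.
  reflexivity.
Qed.

Definition hC (m : Mgrp) (n : Ngrp) : Lgrp :=
  exist _ (xact (ic1 C) (proj1_sig m) (eA C n) - eA C n) (h_ok n (proj2_sig m)).
End ICdata.
Arguments lamC : clear implicits.
Arguments lam'C : clear implicits.
Arguments muC : clear implicits.
Arguments nuC : clear implicits.
Arguments aLC : clear implicits.
Arguments aMC : clear implicits.
Arguments aNC : clear implicits.
Arguments hC : clear implicits.

(* Main.v *)
Require Import Defs.
From Stdlib Require Import ProofIrrelevance.
Set Implicit Arguments.
Unset Strict Implicit.

Section G.
Variable G : Grp.
Implicit Types x y : G.
Lemma opp0 : - (0 : G) = 0.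
Proof. apply (@addKr G 0). rewrite gaddNl, gadd0l. reflexivity. Qed.
Lemma oppK x : - - x = x.
Proof. apply (@addKr G (- x)). rewrite gaddNl, gaddNr. reflexivity. Qed.
Lemma oppD x y : - (x + y) = - y + - x.
Proof. apply (@addKl G (x + y)). rewrite gaddNr, gaddA, <- (gaddA x y), gaddNr, gadd0r, gaddNr. reflexivity. Qed.
Lemma subK x y : x - y + y = x.
Proof. rewrite <- gaddA, gaddNl, gadd0r. reflexivity. Qed.
Lemma addK x y : x + y - y = x.
Proof. rewrite <- gaddA, gaddNr, gadd0r. reflexivity. Qed.
Lemma Kadd x y : - x + (x + y) = y.
Proof. rewrite gaddA, gaddNl, gadd0l. reflexivity. Qed.
Lemma KaddN x y : x + (- x + y) = y.
Proof. rewrite gaddA, gaddNr, gadd0l. reflexivity. Qed.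
End G.

Section Cat.
Variables (G1 G0 : Grp) (s t : G1 -> G0) (e : G0 -> G1)
 (m : forall x y : G1, s x = t y -> G1).
Arguments m : clear implicits.
Hypotheses (hs : is_hom s) (ht : is_hom t) (he : is_hom e)
 (mh : forall x y x' y' (H : s x = t y) (H' : s x' = t y') (H'' : s (x + x') = t (y + y')), m (x + x') (y + y') H'' = m x y H + m x' y' H')
 (se : forall a, s (e a) = a) (te : forall a, t (e a) = a)
 (ul : forall x (H : s (e (t x)) = t x), m (e (t x)) x H = x)
 (ur : forall x (H : s x = t (e (s x))), m x (e (s x)) H = x).

Lemma m_irr x y x' y' H H' : x = x' -> y = y' -> m x y H = m x' y' H'.
Proof. intros -> ->. f_equal. apply proof_irrelevance. Qed.

Lemma m_formula x y (H : s x = t y) : m x y H = x - e (s x) + y.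
Proof.
 assert (H1 : s x = t (e (s x))) by (rewrite te; reflexivity).
 assert (H2 : s (- e (s x)) = t (- e (s x))) by (rewrite (homN _ hs), (homN _ ht), se, te; reflexivity).
 assert (H3 : s (e (s x)) = t y) by (rewrite se; exact H).
 assert (H12 : s (x + - e (s x)) = t (e (s x) + - e (s x))) by (rewrite hs, ht, H2, te; reflexivity).
 assert (H123 : s (x + - e (s x) + e (s x)) = t (e (s x) + - e (s x) + y)) by (rewrite hs, ht, H12, H3; reflexivity).
 rewrite (@m_irr x y _ _ H H123) by (rewrite ?subK, ?gaddNr, ?gadd0l; reflexivity).
 rewrite (mh H12 H3), (mh H1 H2), (ur H1).
 assert (E2 : e (t (- e (s x))) = - e (s x)) by (rewrite (homN _ ht), te, (homN _ he); reflexivity).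
 assert (H2' : s (e (t (- e (s x)))) = t (- e (s x))) by (rewrite se; reflexivity).
 rewrite (@m_irr _ _ _ _ H2 H2' (eq_sym E2) eq_refl), ul.
 assert (E3 : e (s x) = e (t y)) by (rewrite H; reflexivity).
 assert (H3' : s (e (t y)) = t y) by (rewrite se; reflexivity).
 rewrite (@m_irr _ _ _ _ H3 H3' E3 eq_refl), ul.
 reflexivity.
Qed.

Lemma m_comm a b : s a = 0 -> t b = 0 -> a + b = b + a.
Proof.
 intros ha hb.
 assert (H1 : s 0 = t b) by (rewrite hb; apply hom0; exact hs).
 assert (H2 : s a = t 0) by (rewrite ha; symmetry; apply hom0; exact ht).
 assert (H12 : s (0 + a) = t (b + 0)) by (rewrite gadd0l, gadd0r; rewrite ha, hb; reflexivity).
 pose proof (mh H1 H2 H12) as E.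
 rewrite !m_formula in E.
 rewrite gadd0l, gadd0r, ha, (hom0 hs), (hom0 he), opp0, !gadd0r, gadd0l in E.
 exact E.
Qed.
End Cat.

Section X.
Variable X : XMod.
Lemma xa0 a : xact X 0 a = a. Proof. apply (act0 (xm_action (xmodP X))). Qed.
Lemma xaD p q a : xact X (p+q) a = xact X p (xact X q a). Proof. apply (actD (xm_action (xmodP X))). Qed.
Lemma xahom b : is_hom (xact X b). Proof. apply (act_hom (xm_action (xmodP X))). Qed.
Lemma xaz b : xact X b 0 = 0. Proof. apply hom0, xahom. Qed.
Lemma xaN b a : xact X b (-a) = - xact X b a. Proof. apply homN, xahom. Qed.
Lemma xalh : is_hom (xalpha X). Proof. apply (xm_hom (xmodP X)). Qed.
Lemma xeq b a : xalpha X (xact X b a) = b + xalpha X a - b. Proof. apply (xm_equiv (xmodP X)). Qed.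
Lemma xpf a a' : xact X (xalpha X a) a' = a + a' - a. Proof. apply (xm_peiffer (xmodP X)). Qed.
End X.

Section Main.
Variable C : IntCatXMod.
Let hsA := xmor_homA (s_xmorph C).
Let hsB := xmor_homB (s_xmorph C).
Let htA := xmor_homA (t_xmorph C).
Let htB := xmor_homB (t_xmorph C).
Let heA := xmor_homA (e_xmorph C).
Let heB := xmor_homB (e_xmorph C).

Lemma mAf x y H : mA C x y H = x - eA C (sA C x) + y.
Proof. exact (m_formula hsA htA heA (mA_hom C) (seA C) (teA C) (unitlA C) (unitrA C) H). Qed.
Lemma mBf x y H : mB C x y H = x - eB C (sB C x) + y.
Proof. exact (m_formula hsB htB heB (mB_hom C) (seB C) (teB C) (unitlB C) (unitrB C) H). Qed.
Lemma commA a b : sA C a = 0 -> tA C b = 0 -> a + b = b + a.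
Proof. intros h1 h2; exact (m_comm hsA htA heA (mA_hom C) (seA C) (teA C) (unitlA C) (unitrA C) h1 h2). Qed.
Lemma commB a b : sB C a = 0 -> tB C b = 0 -> a + b = b + a.
Proof. intros h1 h2; exact (m_comm hsB htB heB (mB_hom C) (seB C) (teB C) (unitlB C) (unitrB C) h1 h2). Qed.

Lemma triv2 b x : tB C b = 0 -> sA C x = 0 -> xact (ic1 C) b x = x.
Proof.
 intros hb hx.
 assert (Hb : sB C 0 = tB C b) by (rewrite hb; apply hom0, hsB).
 assert (Hx : sA C x = tA C 0) by (rewrite hx; symmetry; apply hom0, htA).
 assert (H' : sA C (xact (ic1 C) 0 x) = tA C (xact (ic1 C) b 0)) by (rewrite xa0, xaz, hx; symmetry; apply hom0, htA).
 pose proof (m_act C 0 b x 0 Hb Hx H') as E.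
 rewrite mAf, mBf, mAf in E.
 rewrite xa0, xaz, hx, (hom0 hsB), (hom0 heA), (hom0 heB) in E; repeat rewrite ?opp0, ?gadd0r, ?gadd0l in E.
 symmetry; exact E.
Qed.

Lemma triv1 b y : sB C b = 0 -> tA C y = 0 -> xact (ic1 C) b y = y.
Proof.
 intros hb hy.
 assert (Hb : sB C b = tB C 0) by (rewrite hb; symmetry; apply hom0, htB).
 assert (Hx : sA C 0 = tA C y) by (rewrite hy; apply hom0, hsA).
 assert (H' : sA C (xact (ic1 C) b 0) = tA C (xact (ic1 C) 0 y)) by (rewrite xa0, xaz, hy; apply hom0, hsA).
 pose proof (m_act C b 0 0 y Hb Hx H') as E.
 rewrite mAf, mBf, mAf in E.
 rewrite xa0, xaz, hb, (hom0 hsA), (hom0 heA), (hom0 heB) in E; repeat rewrite ?opp0, ?gadd0r, ?gadd0l in E.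
 symmetry; exact E.
Qed.

Lemma actker b x : sA C x = 0 -> xact (ic1 C) b x = xact (ic1 C) (eB C (tB C b)) x.
Proof.
 intro hx.
 transitivity (xact (ic1 C) (b - eB C (tB C b) + eB C (tB C b)) x); [rewrite subK; reflexivity|].
 rewrite xaD, triv2; [reflexivity| |].
 - rewrite htB, (homN _ htB), teB, gaddNr; reflexivity.
 - rewrite (xmor_act (s_xmorph C)), seB, hx; apply xaz.
Qed.
End Main.

Ltac seq := apply sub_eq; cbn.
Ltac grp := repeat (rewrite ?gaddA, ?oppD, ?oppK, ?addK, ?subK, ?gaddNr, ?gaddNl, ?gadd0l, ?gadd0r, ?opp0).

Theorem mainTheorem2 (C : IntCatXMod) :
  @crossed_square (Lgrp C) (Mgrp C) (Ngrp C) (Pgrp C)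
    (lamC C) (lam'C C) (muC C) (nuC C)
    (aLC C) (aMC C) (aNC C) (hC C).
Proof.
  pose proof (xmor_homA (s_xmorph C)) as hsA.
  pose proof (xmor_homB (s_xmorph C)) as hsB.
  pose proof (xmor_homA (t_xmorph C)) as htA.
  pose proof (xmor_homB (t_xmorph C)) as htB.
  pose proof (xmor_homA (e_xmorph C)) as heA.
  pose proof (xmor_homB (e_xmorph C)) as heB.
  constructor; unfold Pgrp, Ngrp, lamC, lam'C, muC, nuC, aLC, aMC, aNC, hC.
  - intros [x hx] [y hy]; seq. apply xalh.
  - intros [x hx] [y hy]; cbn. apply htA.
  - intros [x hx] [y hy]; cbn. apply htB.
  - apply xalh.
  - intros [x hx]; cbn. symmetry; apply (xmor_alpha (t_xmorph C)).
  - split.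
    + intros [x hx]; seq. rewrite (hom0 heB). apply xa0.
    + intros p q [x hx]; seq. rewrite heB. apply xaD.
    + intros p [x hx] [y hy]; seq. apply xahom.
  - split.
    + intros [x hx]; seq. rewrite (hom0 heB), opp0, gadd0l, gadd0r. reflexivity.
    + intros p q [x hx]; seq. rewrite heB, oppD, !gaddA. reflexivity.
    + intros p [x hx] [y hy]; seq. rewrite !gaddA, subK. reflexivity.
  - exact (xm_action (xmodP (ic0 C))).
  - intros p [x hx]; seq. apply xeq.
  - intros p [x hx]; cbn. rewrite (xmor_act (t_xmorph C)), teB. reflexivity.
  - split.
    + split.
      * intros [x hx]; seq. rewrite (hom0 heB), opp0, gadd0l, gadd0r. reflexivity.
      * intros p q [x hx]; seq. rewrite heB, oppD, !gaddA. reflexivity.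
      * intros p [x hx] [y hy]; seq. rewrite !gaddA, subK. reflexivity.
    + intros [x hx] [y hy]; cbn; apply htB.
    + intros p [x hx]; cbn. rewrite !htB, (homN _ htB), teB. reflexivity.
    + intros [x hx] [y hy]; seq.
      assert (hk : tB C (x - eB C (tB C x)) = 0) by (rewrite htB, (homN _ htB), teB, gaddNr; reflexivity).
      pose proof (commB (aM_ok (tB C x) hy) hk) as E.
      transitivity ((x - eB C (tB C x)) + (eB C (tB C x) + y - eB C (tB C x)) - (x - eB C (tB C x))).
      { rewrite <- E, addK. reflexivity. }
      grp. reflexivity.
  - exact (xmodP (ic0 C)).
  - split.
    + split.
      * intros [x hx]; seq. rewrite (hom0 heB). apply xa0.
      * intros p q [x hx]; seq. rewrite heB. apply xaD.
      * intros p [x hx] [y hy]; seq. apply xahom.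
    + intros [x hx] [y hy]; cbn. rewrite xalh; apply htB.
    + intros p [x hx]; cbn. rewrite xeq, !htB, (homN _ htB), teB. reflexivity.
    + intros [x hx] [y hy]; seq. rewrite <- xpf. symmetry; apply actker; exact hy.
  - intros [m hm] n; seq.
    rewrite xalh, xeq, (homN _ (@xalh (ic1 C))), <- (xmor_alpha (e_xmorph C)). grp. reflexivity.
  - intros [m hm] n; cbn. rewrite htA, (homN _ htA), (xmor_act (t_xmorph C)), teA. reflexivity.
  - intros [l hl] n; seq. rewrite (xmor_alpha (e_xmorph C)), xpf, xaN, xpf. grp. reflexivity.
  - intros [m hm] [l hl]; seq.
    rewrite <- (actker m hl).
    assert (hj : tA C (l - eA C (tA C l)) = 0) by (rewrite htA, (homN _ htA), teA, gaddNr; reflexivity).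
    assert (E0 : xact (ic1 C) m l = (l - eA C (tA C l)) + xact (ic1 C) m (eA C (tA C l))).
    { transitivity (xact (ic1 C) m (l - eA C (tA C l) + eA C (tA C l))); [rewrite subK; reflexivity|].
      rewrite xahom, (triv1 hm hj). reflexivity. }
    rewrite E0.
    assert (hx : sA C (- eA C (tA C l) + xact (ic1 C) m (eA C (tA C l))) = 0).
    { rewrite hsA, (homN _ hsA), (xmor_act (s_xmorph C)), hm, seA, xa0, gaddNl. reflexivity. }
    assert (hb : tA C (- l + eA C (tA C l)) = 0).
    { rewrite htA, (homN _ htA), teA, gaddNl. reflexivity. }
    pose proof (commA hx hb) as E'.
    transitivity (l + (- l + eA C (tA C l) + (- eA C (tA C l) + xact (ic1 C) m (eA C (tA C l))))
                  - eA C (tA C l)).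
    { grp. reflexivity. }
    rewrite <- E'. grp. reflexivity.
  - intros [m hm] [m' hm'] n; seq.
    rewrite <- (actker m (h_ok n hm')), xaD, xahom, xaN. grp. reflexivity.
  - intros [m hm] n n'; seq.
    rewrite heA, xahom, (xmor_alpha (e_xmorph C)), xpf. grp. reflexivity.
  - intros p [m hm] n; seq.
    rewrite (xmor_act (e_xmorph C)), <- xaD, subK, xaD, xahom, xaN. reflexivity.
Qed.
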